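(* Let $n\ge2$ and let $T=(n;\sigma,\delta,-\sigma)$ with $\sigma,\delta\in\mathbb{R}$, $\sigma\ne0$ (a real shifted skew-symmetric tridiagonal Toeplitz matrix). Then every eigenvalue $\lambda_h$ of $T$ has $\mathcal A_{\mathcal T}$-structured condition number $\kappa_{\mathcal A_{\mathcal T}}(\lambda_h)=\frac1{\sqrt n}$, $h=1,\dots,n$.
   Context: $(n;\sigma,\delta,\tau)$ is the $n\times n$ tridiagonal Toeplitz matrix with diagonal $\delta$, superdiagonal $\tau$, subdiagonal $\sigma$. For $\sigma\tau\ne0$ the eigenvalue $\lambda_h=\delta+2\sqrt{\sigma\tau}\cos\frac{h\pi}{n+1}$ has right eigenvector $x_h$ with $x_{h,k}=(\sqrt{\sigma/\tau})^k\sin\frac{hk\pi}{n+1}$ and left eigenvector $y_h$ ($y_h^HT=\lambda_hy_h^H$) with $y_{h,k}=(\sqrt{\bar\tau/\bar\sigma})^k\sin\frac{hk\pi}{n+1}$; let $\widetilde x_h,\widetilde y_h$ be their normalizations, $\kappa(\lambda_h)=\|x_h\|_2\|y_h\|_2/|y_h^Hx_h|$ (here equal to $1$), and $W_h=\widetilde y_h\widetilde x_h^H$. $\mathcal A_{\mathcal T}$ denotes the real subspace of real matrices $(n;s,d,-s)$, $s,d\in\mathbb{R}$; $W_h|_{\mathcal A_{\mathcal T}}$ is the orthogonal projection of $W_h$ onto $\mathcal A_{\mathcal T}$ with respect to the real Frobenius inner product $\mathrm{Re}\,\mathrm{tr}(A^HB)$, and $\kappa_{\mathcal A_{\mathcal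 T}}(\lambda_h)=\kappa(\lambda_h)\|W_h|_{\mathcal A_{\mathcal T}}\|_F$. *)

(* Defs.v *)
From HB Require Import structures.
From mathcomp Require Import all_boot all_order all_algebra.
From mathcomp Require Import complex.
From mathcomp Require Import reals trigo.
Set Implicit Arguments. Unset Strict Implicit. Unset Printing Implicit Defensive.
Import Order.TTheory GRing.Theory Num.Theory.
Local Open Scope ring_scope.
Local Open Scope complex_scope.

Section TridiagToeplitz.
Variable R : realType.
Local Notation C := R[i].

Definition tridiag (n : nat) (s d t : C) : 'M[C]_n :=
  \matrix_(i < n, j < n)
    if i == j.+1 :> nat then s
    else if i == j :> nat then d
    else if j == i.+1 :> nat then t
    else 0.

Definition adjmx m n (A : 'M[C]_(m, n)) : 'M[C]_(n, m) := (map_mx (@conjc R) A)^T.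

Definition vnorm n (v : 'cV[C]_n) : R :=
  Num.sqrt (\sum_(k < n) complex.Re ((v k 0)^* * v k 0)).

Definition hdot n (u v : 'cV[C]_n) : C := \sum_(k < n) (u k 0)^* * v k 0.

Definition rip n (A B : 'M[C]_n) : R := complex.Re (\tr (adjmx A *m B)).
Definition frob n (A : 'M[C]_n) : R := Num.sqrt (rip A A).

Definition reigvec (n : nat) (sigma tau : C) (h : nat) : 'cV[C]_n :=
  \col_(k < n) ((sqrtc (sigma / tau)) ^+ k.+1 *
                (sin (h%:R * k.+1%:R * pi / n.+1%:R))%:C).

Definition leigvec (n : nat) (sigma tau : C) (h : nat) : 'cV[C]_n :=
  \col_(k < n) ((sqrtc (tau^* / sigma^*)) ^+ k.+1 *
                (sin (h%:R * k.+1%:R * pi / n.+1%:R))%:C).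

Definition normalize n (v : 'cV[C]_n) : 'cV[C]_n := ((vnorm v)^-1)%:C *: v.

Definition kappa n (x y : 'cV[C]_n) : R :=
  vnorm x * vnorm y / Normc.normc (hdot y x).

Definition Wmx n (x y : 'cV[C]_n) : 'M[C]_n := normalize y *m adjmx (normalize x).

Definition in_AT n (M : 'M[C]_n) : Prop :=
  exists s d : R, M = tridiag n s%:C d%:C (- s%:C).

Definition is_proj_AT n (W P : 'M[C]_n) : Prop :=
  in_AT P /\ forall A, in_AT A -> rip A (W - P) = 0.

End TridiagToeplitz.

(* Main.v *)
Require Import Defs.
From HB Require Import structures.
From mathcomp Require Import all_boot all_order all_algebra.
From mathcomp Require Import complex.
From mathcomp Require Import reals trigo.
From mathcomp Require Import zify ring lra.
Import Order.TTheory GRing.Theory Num.Theory.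
Local Open Scope ring_scope.
Local Open Scope complex_scope.
Lemma ReD (R : realType) (a b : R[i]) : complex.Re (a + b) = complex.Re a + complex.Re b.
Proof. by case: a; case: b. Qed.
Lemma Re0 (R : realType) : complex.Re (0 : R[i]) = 0.
Proof. by []. Qed.
Lemma Re_sum (R : realType) (I : finType) (F : I -> R[i]) :
  complex.Re (\sum_i F i) = \sum_i complex.Re (F i).
Proof. exact: (big_morph _ (@ReD R) (@Re0 R)). Qed.
Lemma ReN (R : realType) (a : R[i]) : complex.Re (- a) = - complex.Re a.
Proof. by case: a. Qed.
Lemma ReZ (R : realType) (c : R) (a : R[i]) : complex.Re (c%:C * a) = c * complex.Re a.
Proof. by case: a => p q /=; rewrite mul0r subr0. Qed.
Lemma ReJM (R : realType) (a : R[i]) :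
  complex.Re (a^* * a) = complex.Re a ^+ 2 + complex.Im a ^+ 2.
Proof. case: a => p q /=; rewrite !expr2; ring. Qed.
Lemma JM_real (R : realType) (a : R[i]) : a^* * a = (complex.Re (a^* * a))%:C.
Proof. case: a => p q /=; apply/eqP; rewrite eq_complex /=; apply/andP; split; apply/eqP; ring. Qed.

Lemma adjmxE (R : realType) m n (A : 'M[R[i]]_(m, n)) i j : adjmx A i j = (A j i)^*.
Proof. by rewrite !mxE. Qed.
Lemma adjmxM (R : realType) m n p (A : 'M[R[i]]_(m, n)) (B : 'M[R[i]]_(n, p)) :
  adjmx (A *m B) = adjmx B *m adjmx A.
Proof. by rewrite /adjmx map_mxM trmx_mul. Qed.
Lemma adjmxK (R : realType) m n (A : 'M[R[i]]_(m, n)) : adjmx (adjmx A) = A.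
Proof. by apply/matrixP => i j; rewrite !adjmxE conjcK. Qed.
Lemma adjmxZ (R : realType) m n (c : R) (A : 'M[R[i]]_(m, n)) : adjmx (c%:C *: A) = c%:C *: adjmx A.
Proof. apply/matrixP => i j; rewrite !mxE; case: (A j i) => p q /=; apply/eqP; rewrite eq_complex /=; apply/andP; split; apply/eqP; ring. Qed.
Lemma adjmxD (R : realType) m n (A B : 'M[R[i]]_(m, n)) : adjmx (A + B) = adjmx A + adjmx B.
Proof. by apply/matrixP => i j; rewrite !mxE rmorphD. Qed.
Lemma adjmx1 (R : realType) n : adjmx (1%:M : 'M[R[i]]_n) = 1%:M.
Proof. by apply/matrixP => i j; rewrite !mxE eq_sym conjc_nat. Qed.

Lemma rip_addl (R : realType) n (A A' B : 'M[R[i]]_n) : rip (A + A') B = rip A B + rip A' B.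
Proof. by rewrite /rip adjmxD mulmxDl mxtraceD ReD. Qed.
Lemma rip_scalel (R : realType) n (c : R) (A B : 'M[R[i]]_n) : rip (c%:C *: A) B = c * rip A B.
Proof. by rewrite /rip adjmxZ -scalemxAl mxtraceZ ReZ. Qed.
Lemma rip_addr (R : realType) n (A B B' : 'M[R[i]]_n) : rip A (B + B') = rip A B + rip A B'.
Proof. by rewrite /rip mulmxDr mxtraceD ReD. Qed.
Lemma rip_scaler (R : realType) n (c : R) (A B : 'M[R[i]]_n) : rip A (c%:C *: B) = c * rip A B.
Proof. by rewrite /rip -scalemxAr mxtraceZ ReZ. Qed.
Lemma rip_1l (R : realType) n (B : 'M[R[i]]_n) : rip 1%:M B = complex.Re (\tr B).
Proof. by rewrite /rip adjmx1 mul1mx. Qed.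
Lemma rip_sum (R : realType) n (A B : 'M[R[i]]_n) :
  rip A B = complex.Re (\sum_i \sum_j (A j i)^* * B j i).
Proof. by rewrite /rip /mxtrace; congr complex.Re; apply: eq_bigr => i _; rewrite mxE; apply: eq_bigr => j _; rewrite adjmxE. Qed.
Definition Emx (R : realType) n : 'M[R[i]]_n := tridiag n 1 0 (-1).

Lemma tridiag_dec (R : realType) n (s d : R) :
  tridiag n s%:C d%:C (- s%:C) = s%:C *: Emx R n + d%:C *: 1%:M.
Proof.
apply/matrixP => i j; rewrite !mxE -val_eqE /=.
case: eqP => [h1|h1]; case: eqP => [h2|h2]; try lia; rewrite ?mulr1 ?mulr0 ?addr0 ?add0r //.
case: eqP => [h3|h3]; rewrite ?mulr0 ?addr0 ?mulrN1 //.
Qed.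

Lemma Jfix (R : realType) (a : R[i]) : complex.Im a = 0 -> a^* = a.
Proof. by case: a => p q /= ->; rewrite oppr0. Qed.

Lemma E_conj (R : realType) n i j : (Emx R n i j)^* = Emx R n i j.
Proof.
apply: Jfix; rewrite !mxE; case: eqP => _ //; case: eqP => _ //; case: eqP => _ //=.
by rewrite oppr0.
Qed.

Lemma E_anti (R : realType) n i j : Emx R n j i = - Emx R n i j.
Proof.
rewrite !mxE.
move: (nat_of_ord i) (nat_of_ord j) => a b.
have [h1|h1] := eqVneq a b.+1; have [h2|h2] := eqVneq b a.+1; try lia;
have [h3|h3] := eqVneq a b; have [h4|h4] := eqVneq b a; try lia;
rewrite /= ?opprK ?oppr0 //.
Qed.

Lemma tr_E (R : realType) n : \tr (Emx R n) = 0.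
Proof.
rewrite /mxtrace big1 // => i _; rewrite !mxE eqxx.
case: eqP => h; try lia. by [].
Qed.

Lemma rip_E_herm (R : realType) n (B : 'M[R[i]]_n) : adjmx B = B -> rip (Emx R n) B = 0.
Proof.
move=> hB; rewrite rip_sum.
set T := \sum_i _.
have hT : T^* = - T.
  rewrite /T rmorph_sum /= exchange_big /= -sumrN; apply: eq_bigr => i _.
  rewrite rmorph_sum /= -sumrN; apply: eq_bigr => j _.
  rewrite rmorphM /= conjcK.
  have -> : (B j i)^* = B i j by rewrite -{2}hB adjmxE.
  by rewrite E_anti mulNr; congr (- (_ * _)); symmetry; apply: E_conj.
move: hT; case: T => p q /= [] /eqP; rewrite -subr_eq0 opprK; lra.
Qed.
Lemma ReJM_ge0 (R : realType) (a : R[i]) : 0 <= complex.Re (a^* * a).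
Proof. by rewrite ReJM addr_ge0 // sqr_ge0. Qed.

Lemma rip_EE_gt0 (R : realType) n : (2 <= n)%N -> 0 < rip (Emx R n) (Emx R n).
Proof.
case: n => [|[|m]] // _.
rewrite rip_sum Re_sum (bigD1 ord0) //= Re_sum (bigD1 (Ordinal (isT : (1 < m.+2)%N))) //=.
set a := complex.Re _.
have ha : a = 1.
  rewrite /a !mxE /=; lra.
have hb : 0 <= \sum_(j < m.+2 | j != Ordinal (isT : (1 < m.+2)%N)) complex.Re ((Emx R m.+2 j ord0)^* * Emx R m.+2 j ord0).
  by apply: sumr_ge0 => j _; apply: ReJM_ge0.
have hc : 0 <= \sum_(i < m.+2 | i != ord0) complex.Re (\sum_j (Emx R m.+2 j i)^* * Emx R m.+2 j i).
  by apply: sumr_ge0 => i _; rewrite Re_sum; apply: sumr_ge0 => j _; apply: ReJM_ge0.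
lra.
Qed.

Lemma ReZZ (R : realType) (c : R) (a : R[i]) :
  complex.Re (c%:C * a * (c%:C * a)^*) = c ^+ 2 * complex.Re (a^* * a).
Proof. case: a => p q /=; rewrite !expr2; ring. Qed.

Lemma sumC (R : realType) (I : finType) (F : I -> R) : \sum_i (F i)%:C = (\sum_i F i)%:C :> R[i].
Proof.
apply: esym; apply: (big_morph (fun r : R => r%:C)).
  by move=> a b; apply/eqP; rewrite eq_complex /= addr0 !eqxx.
by [].
Qed.

Lemma W_herm (R : realType) n (x : 'cV[R[i]]_n) : adjmx (Wmx x x) = Wmx x x.
Proof. by rewrite /Wmx adjmxM adjmxK. Qed.

Lemma W_tr (R : realType) n (x : 'cV[R[i]]_n) :
  0 < \sum_k complex.Re ((x k 0)^* * x k 0) -> complex.Re (\tr (Wmx x x)) = 1.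
Proof.
move=> hpos; rewrite /Wmx /mxtrace Re_sum.
under eq_bigr => i _ do rewrite mxE big_ord1 adjmxE /normalize !mxE ReZZ.
rewrite -mulr_sumr /vnorm exprVn sqr_sqrtr ?ltW // mulVf //; lra.
Qed.

Lemma W_kappa (R : realType) n (x : 'cV[R[i]]_n) :
  0 < \sum_k complex.Re ((x k 0)^* * x k 0) -> kappa x x = 1.
Proof.
move=> hpos; rewrite /kappa /hdot.
under eq_bigr => i _ do rewrite JM_real.
rewrite sumC /vnorm -expr2 sqr_sqrtr ?ltW //= expr0n /= addr0 sqrtr_sqr ger0_norm ?ltW // divff //; lra.
Qed.
Lemma C1E (R : realType) : (1 : R)%:C = 1 :> R[i].
Proof. by apply/eqP; rewrite eq_complex /= !eqxx. Qed.
Lemma C0E (R : realType) : (0 : R)%:C = 0 :> R[i].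
Proof. by apply/eqP; rewrite eq_complex /= !eqxx. Qed.
Lemma E_eq (R : realType) n : tridiag n (1 : R)%:C (0 : R)%:C (- (1 : R)%:C) = Emx R n.
Proof. by rewrite C1E C0E. Qed.
Lemma one_eq (R : realType) n : tridiag n (0 : R)%:C (1 : R)%:C (- (0 : R)%:C) = 1%:M.
Proof. by rewrite tridiag_dec C1E C0E scale0r add0r scale1r. Qed.
Lemma rip_oppr (R : realType) n (A B : 'M[R[i]]_n) : rip A (- B) = - rip A B.
Proof. by rewrite /rip mulmxN raddfN /= ReN. Qed.

Lemma Re_nat (R : realType) k : complex.Re (k%:R : R[i]) = k%:R.
Proof. elim: k => // k IH; by rewrite !mulrS ReD IH. Qed.

Lemma keyE (R : realType) n (x : 'cV[R[i]]_n) (s d : R) :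
  rip (Emx R n) (Wmx x x - tridiag n s%:C d%:C (- s%:C)) = - (s * rip (Emx R n) (Emx R n)).
Proof.
rewrite rip_addr rip_oppr tridiag_dec rip_addr !rip_scaler (@rip_E_herm _ _ _ (W_herm _ _ x)).
by rewrite (@rip_E_herm _ _ _ (adjmx1 R n)) mulr0 addr0 sub0r.
Qed.

Lemma key1 (R : realType) n (x : 'cV[R[i]]_n) (s d : R) :
  0 < \sum_k complex.Re ((x k 0)^* * x k 0) ->
  rip 1%:M (Wmx x x - tridiag n s%:C d%:C (- s%:C)) = 1 - d * n%:R.
Proof.
move=> hpos.
rewrite rip_addr rip_oppr tridiag_dec rip_addr !rip_scaler !rip_1l W_tr //.
by rewrite tr_E mxtrace1 Re_nat /= mulr0 add0r.
Qed.

Theorem proposition15 (R : realType) (n : nat) (sigma delta : R) (h : nat) :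
  (2 <= n)%N -> sigma != 0 -> (1 <= h <= n)%N ->
  let x := reigvec n sigma%:C (- sigma%:C) h in
  let y := leigvec n sigma%:C (- sigma%:C) h in
  let W := Wmx x y in
  (exists P, is_proj_AT W P) /\
  (forall P, is_proj_AT W P -> kappa x y * frob P = (Num.sqrt (n%:R : R))^-1).
Proof.
move=> hn hs /andP [h1 h2] x y W.
have hs' : sigma%:C != 0 :> R[i] by apply: contra hs => /eqP [->].
have ex1 : sigma%:C / - sigma%:C = -1 :> R[i] by rewrite invrN mulrN divff.
have ex2 : (- sigma%:C)^* / (sigma%:C)^* = (-1 : R[i]).
  have -> : Num.conj (sigma%:C : R[i]) = sigma%:C by apply: Jfix.
  have -> : Num.conj (- sigma%:C : R[i]) = - sigma%:C by apply: Jfix; rewrite /= oppr0.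
  by rewrite mulNr divff.
have hxy : y = x by rewrite /x /y /reigvec /leigvec ex1 ex2.
have hn0 : (0 < n)%N by lia.
have hpos : 0 < \sum_k complex.Re ((x k 0)^* * x k 0).
  rewrite (bigD1 (Ordinal hn0)) //=.
  have hsin : forall t : R, t = pi * (h%:R / n.+1%:R) -> 0 < sin t.
    move=> t ->; apply: sin_gt0_pi.
    have hp := pi_gt0 R.
    have ht0 : 0 < h%:R / n.+1%:R :> R by apply: divr_gt0; rewrite ltr0n; lia.
    have ht1 : h%:R / n.+1%:R < 1 :> R by rewrite ltr_pdivrMr ?ltr0n // mul1r ltr_nat; lia.
    by apply/andP; split; [exact: mulr_gt0 | rewrite -[X in _ < X]mulr1 ltr_pM2l].
  have hrest : 0 <= \sum_(k < n | k != Ordinal hn0) complex.Re ((x k 0)^* * x k 0).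
    by apply: sumr_ge0 => k _; apply: ReJM_ge0.
  have hterm : 0 < complex.Re ((x (Ordinal hn0) 0)^* * x (Ordinal hn0) 0).
    rewrite /x /reigvec mxE ex1 sqrtN1 expr1 ReJM /=.
    set r := sin _.
    have hr : 0 < r by apply: hsin; ring.
    nra.
  lra.
have hW : W = Wmx x x by rewrite /W hxy.
have hk : kappa x y = 1 by rewrite hxy W_kappa.
have hn' : (n%:R : R) != 0 by rewrite pnatr_eq0; lia.
split.
  exists (tridiag n 0%:C (n%:R^-1)%:C (- 0%:C)); split; first by exists 0, (n%:R^-1).
  move=> A [s' [d' ->]]; rewrite hW (tridiag_dec R n s' d') rip_addl !rip_scalel (keyE R n x 0 (n%:R^-1)) (key1 R n x 0 (n%:R^-1) hpos).
  by rewrite (mulVf hn') mul0r oppr0 subrr !mulr0 addr0.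
move=> P [[s [d ->]] hP].
have hE : in_AT (Emx R n) by exists 1, 0; rewrite E_eq.
have h1M : in_AT (1%:M : 'M[R[i]]_n).
  by exists 0, 1; rewrite one_eq.
have e1 := hP _ hE; have e2 := hP _ h1M.
rewrite hW (keyE R n x s d) in e1; rewrite hW (key1 R n x s d hpos) in e2.
have he := rip_EE_gt0 R n hn.
have -> : s = 0.
  move: e1 => /eqP; rewrite oppr_eq0 mulf_eq0 => /orP [/eqP //|/eqP he0].
  by move: he; rewrite he0 ltxx.
have -> : d = n%:R^-1.
  have hd : d * n%:R = 1 by move/eqP: e2; rewrite subr_eq0 => /eqP <-.
  by rewrite -[d](mulfK hn') hd mul1r.
rewrite hk mul1r /frob (tridiag_dec R n 0 (n%:R^-1)) C0E scale0r add0r rip_scalel rip_scaler rip_1l mxtrace1 Re_nat.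
by rewrite (mulVf hn') mulr1 sqrtrV // ler0n.
Qed.
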